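(* Let $(X,d)$ be a compact metric space, $T:X\to X$ continuous, $Z\subset X$ non-empty, and $\Phi=\{\varphi_n:X\to\mathbb{R}\}_{n\in\mathbb{N}}$ a sequence of continuous functions satisfying the tempered distortion condition $\lim_{\varepsilon\to 0}\limsup_{n\to\infty}\varphi_n(\varepsilon)/n=0$, where $\varphi_n(\varepsilon)=\sup\{|\varphi_n(x)-\varphi_n(y)|: x\in X,\ y\in B_n(x,e^{-n\varepsilon})\}$. Then for every $\theta>0$ there exists $\varepsilon_0>0$ such that for every $0<\varepsilon<\varepsilon_0$ there exists $N_0\in\mathbb{N}$ such that for all $N\ge N_0$ and all $s\in\mathbb{R}$, $$\mathcal{M}^{s+\theta}_{N,\varepsilon/2}(Z,\Phi)\le W^s_{N,\varepsilon}(Z,\Phi)\le M^s_{N,\varepsilon}(Z,\Phi).$$ Consequently $P^{\tilde B}_Z(T,\Phi)=P^{\widetilde{WB}}_Z(T,\Phi)$.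
   Context: The neutralized Bowen ball is $B_n(x,e^{-n\varepsilon})=\{y\in X: d(T^jx,T^jy)<e^{-n\varepsilon}\ \forall\,0\le j\le n-1\}$. For $\varepsilon>0$, $N\in\mathbb{N}$, $s\in\mathbb{R}$: $M^s_{N,\varepsilon}(Z,\Phi)=\inf\sum_{i\in I}\exp[-n_is+\sup_{y\in B_{n_i}(x_i,e^{-n_i\varepsilon})}\varphi_{n_i}(y)]$, infimum over all finite or countable covers $\{B_{n_i}(x_i,e^{-n_i\varepsilon})\}_{i\in I}$ of $Z$ with $n_i\ge N$, $x_i\in X$; $M^s_\varepsilon=\lim_{N\to\infty}M^s_{N,\varepsilon}$; $M_\varepsilon(Z,\Phi)=\inf\{s:M^s_\varepsilon(Z,\Phi)=0\}=\sup\{s:M^s_\varepsilon(Z,\Phi)=\infty\}$; $P^{\tilde B}_Z(T,\Phi)=\lim_{\varepsilon\to0}M_\varepsilon(Z,\Phi)$. $\mathcal{M}^s_{N,\varepsilon}(Z,\Phi)=\inf\sum_{i\in I}\exp[-n_is+\varphi_{n_i}(x_i)]$, infimum over the same class of covers. Weighted version: $W^s_{N,\varepsilon}(Z,\Phi)=\inf\sum_{i\in I}c_i\exp[-n_is+\sup_{y\in B_{n_i}(x_i,e^{-n_i\varepsilon})}\varphi_{n_i}(y)]$, infimum over all finite or countable families $\{(B_{n_i}(x_i,e^{-n_i\varepsilon}),c_i)\}_{i\in I}$ with $0<c_i<\infty$, $x_i\in X$, $n_i\ge N$ and $\sum_ic_i\chi_{B_{n_i}(x_i,e^{-n_i\varepsilon})}\ge\chi_Z$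 ($\chi_A$ the indicator of $A$); $W^s_\varepsilon(Z,\Phi)=\lim_{N\to\infty}W^s_{N,\varepsilon}(Z,\Phi)$; $W_\varepsilon(Z,\Phi)=\inf\{s:W^s_\varepsilon(Z,\Phi)=0\}=\sup\{s:W^s_\varepsilon(Z,\Phi)=\infty\}$; $P^{\widetilde{WB}}_Z(T,\Phi)=\lim_{\varepsilon\to0}W_\varepsilon(Z,\Phi)$. *)

(* Defs.v *)
From HB Require Import structures.
From mathcomp Require Import all_boot all_order all_algebra.
From mathcomp Require Import all_classical all_reals all_analysis.
Set Implicit Arguments. Unset Strict Implicit. Unset Printing Implicit Defensive.
Import Order.TTheory GRing.Theory Num.Theory.
Import numFieldNormedType.Exports.
Local Open Scope classical_set_scope.
Local Open Scope ring_scope.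

Section Pressure.
Context {R : realType} {X : metricType R}.
Implicit Types (T : X -> X) (phi : nat -> X -> R) (Z : set X).

Definition bowen_ball T (n : nat) (x : X) (r : R) : set X :=
  [set y | forall j, (j < n)%N -> mdist (iter j T x) (iter j T y) < r].

Definition nball T (n : nat) (x : X) (eps : R) : set X :=
  bowen_ball T n x (expR (- (n%:R * eps))).

Definition sup_ball T phi (n : nat) (x : X) (eps : R) : \bar R :=
  ereal_sup [set (phi n y)%:E | y in nball T n x eps].

(* admissible covers: index set I (finite or countable, subset of nat),
   centres x_i, times n_i >= N, covering Z *)
Definition is_cover T Z (N : nat) (eps : R) (I : set nat) (x : nat -> X)
  (n : nat -> nat) : Prop :=
  (forall i, I i -> (N <= n i)%N) /\
  Z `<=` \bigcup_(i in I) nball T (n i) (x i) eps.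

Definition M_N T phi Z (s : R) (N : nat) (eps : R) : \bar R :=
  ereal_inf [set v | exists (I : set nat) (x : nat -> X) (n : nat -> nat),
    is_cover T Z N eps I x n /\
    v = (\esum_(i in I) ((expR (- ((n i)%:R * s)))%:E
                           * expeR (sup_ball T phi (n i) (x i) eps)))%E].

(* calligraphic M^s_{N,eps}(Z,Phi): the potential is evaluated at the centre *)
Definition Mc_N T phi Z (s : R) (N : nat) (eps : R) : \bar R :=
  ereal_inf [set v | exists (I : set nat) (x : nat -> X) (n : nat -> nat),
    is_cover T Z N eps I x n /\
    v = (\esum_(i in I) (expR (- ((n i)%:R * s) + phi (n i) (x i)))%:E)%E].

Definition is_wfamily T Z (N : nat) (eps : R) (I : set nat) (x : nat -> X)
  (n : nat -> nat) (c : nat -> R) : Prop :=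
  (forall i, I i -> (N <= n i)%N /\ 0 < c i) /\
  (forall z, Z z ->
     (1 <= \esum_(i in I) (c i * \1_(nball T (n i) (x i) eps) z)%:E)%E).

Definition W_N T phi Z (s : R) (N : nat) (eps : R) : \bar R :=
  ereal_inf [set v | exists (I : set nat) (x : nat -> X) (n : nat -> nat)
                            (c : nat -> R),
    is_wfamily T Z N eps I x n c /\
    v = (\esum_(i in I) ((c i * expR (- ((n i)%:R * s)))%:E
                           * expeR (sup_ball T phi (n i) (x i) eps)))%E].

Definition M_s T phi Z (s eps : R) : \bar R := limn (fun N => M_N T phi Z s N eps).
Definition W_s T phi Z (s eps : R) : \bar R := limn (fun N => W_N T phi Z s N eps).

Definition M_eps T phi Z (eps : R) : \bar R :=
  ereal_inf [set s%:E | s in [set s | M_s T phi Z s eps = 0%E]].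
Definition W_eps T phi Z (eps : R) : \bar R :=
  ereal_inf [set s%:E | s in [set s | W_s T phi Z s eps = 0%E]].

Definition P_B T phi Z : \bar R := lim (M_eps T phi Z eps @[eps --> 0^'+]).
Definition P_WB T phi Z : \bar R := lim (W_eps T phi Z eps @[eps --> 0^'+]).

Definition distortion T phi (n : nat) (eps : R) : \bar R :=
  ereal_sup [set v | exists (x y : X), nball T n x eps y /\
                      v = (`|phi n x - phi n y|)%:E].

Definition tempered_distortion T phi : Prop :=
  (fun eps => limn_esup (fun n => (distortion T phi n eps * (n%:R^-1)%:E)%E))
    @ 0^'+ --> 0%E.

End Pressure.

(* Main.v *)
Require Import Defs.
From HB Require Import structures.
From mathcomp Require Import all_boot all_order all_algebra.
From mathcomp Require Import all_classical all_reals all_analysis.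
From mathcomp Require Import ring lra.
Import Order.TTheory GRing.Theory Num.Theory.
Import numFieldNormedType.Exports.
Local Open Scope classical_set_scope.
Local Open Scope ring_scope.
Section Basic.
Context {R : realType} {X : metricType R}.
Variable T : X -> X.

Lemma bowen_sym n x y r : bowen_ball T n x r y -> bowen_ball T n y r x.
Proof. by move=> H j jn; rewrite metric_sym; exact: H. Qed.

Lemma bowen_tri n x y z r r' : bowen_ball T n x r y -> bowen_ball T n y r' z ->
  bowen_ball T n x (r + r') z.
Proof.
move=> H1 H2 j jn; rewrite (le_lt_trans (metric_triangle _ (iter j T y) _))//.
by rewrite ltrD//; [exact: H1|exact: H2].
Qed.

Lemma bowen_mono n x r r' : r <= r' -> bowen_ball T n x r `<=` bowen_ball T n x r'.
Proof. by move=> rr y H j jn; rewrite (lt_le_trans _ rr)//; exact: H. Qed.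

Lemma bowen_center n x r : 0 < r -> bowen_ball T n x r x.
Proof. by move=> r0 j _; rewrite mdistxx. Qed.

Lemma iter_cont (contT : continuous T) j : continuous (iter j T).
Proof.
elim: j => [|j IH] x /=; first exact: cvg_id.
exact: (@continuous_comp _ _ _ (iter j T) T x (IH x) (contT _)).
Qed.

Lemma bowen_nbhs (contT : continuous T) n x r : 0 < r -> nbhs x (bowen_ball T n x r).
Proof.
move=> r0.
have H j : nbhs x [set y | mdist (iter j T x) (iter j T y) < r].
  have := iter_cont contT j x (ball (iter j T x) r) (nbhsx_ballx _ _ r0).
  by rewrite ballEmdist.
elim: n => [|n IH]; first by apply: filterS filterT => y _ j; rewrite ltn0.
apply: filterS (filterI IH (H n)) => y [H1 H2] j.
by rewrite ltnS leq_eqVlt => /orP[/eqP->|/H1].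
Qed.

Lemma bowen_finite_cover (cpt : compact [set: X]) (contT : continuous T) n r :
  0 < r -> exists l : seq X, forall x, exists2 y, y \in l & bowen_ball T n y r x.
Proof.
move=> r0.
pose F := filter_from [set: seq X] (fun l0 => [set l : seq X | {subset l0 <= l}]).
have FF : Filter F.
  apply: filter_from_filter; first by exists [::].
  move=> i j _ _; exists (i ++ j) => // l /= H; split => z zi; apply: H;
  by rewrite mem_cat zi ?orbT.
have := (compact_near_coveringP _).1 cpt (seq X) F
  (fun l x => exists2 y, y \in l & bowen_ball T n y r x) FF.
case.
- move=> x _; exists (bowen_ball T n x r, [set l : seq X | x \in l]).
    split; first exact: bowen_nbhs.
    by exists [:: x] => // l /= H; apply: H; rewrite mem_seq1.
  by move=> [x' l] [/= Bx' xl]; exists x.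
- move=> l0 _ H; exists l0 => x; exact: (H l0 (fun _ h => h) x I).
Qed.
End Basic.
Section Sep.
Context {R : realType} {X : metricType R}.
Variable T : X -> X.

Definition sepd n r (K : seq X) := uniq K /\
  forall a b, a \in K -> b \in K -> a != b -> ~ bowen_ball T n a (r + r) b.

Lemma sep_size n r (l : seq X) K :
  (forall x, exists2 y, y \in l & bowen_ball T n y r x) -> sepd n r K ->
  (size K <= size l)%N.
Proof.
move=> Hl [uK sK].
pose g a := projT1 (cid2 (Hl a)).
have gl a : g a \in l by rewrite /g; case: cid2.
have gb a : bowen_ball T n (g a) r a by rewrite /g; case: cid2.
have ginj : {in K &, injective g}.
  move=> a b aK bK gab; case: (eqVneq a b) => // ab; exfalso.
  apply: (sK a b aK bK ab); apply: (@bowen_tri _ _ T n a (g a) b r r).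
    exact/bowen_sym/gb.
  by rewrite gab; exact: gb.
rewrite -(size_map g); apply: uniq_leq_size; first by rewrite map_inj_in_uniq.
by move=> y /mapP [a _ ->].
Qed.

Lemma max_sep n r (A : set X) (M : nat) :
  (forall K, sepd n r K -> (size K <= M)%N) -> 0 < r ->
  exists K, [/\ sepd n r K, (forall a, a \in K -> A a) &
    forall z, A z -> exists2 a, a \in K & bowen_ball T n a (r + r) z].
Proof.
move=> bnd r0.
suff: forall d K, sepd n r K -> (forall a, a \in K -> A a) -> (M <= size K + d)%N ->
  exists K, [/\ sepd n r K, (forall a, a \in K -> A a) &
    forall z, A z -> exists2 a, a \in K & bowen_ball T n a (r + r) z].
  by move=> /(_ M [::]); apply => //; split.
elim=> [|d IH] K sK AK hd;
 (case: (pselect (forall z, A z -> exists2 a, a \in K & bowen_ball T n a (r + r) z))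
   => [H|H]; first by exists K);
 (have [z [Az nz]] : exists z, A z /\ ~ exists2 a, a \in K & bowen_ball T n a (r + r) z
   by apply: contra_notP H => H z Az; apply: contra_notP H => H; exists z);
 (have sK' : sepd n r (z :: K);
  [ case: sK => uK sK; split;
    [ rewrite /= uK andbT; apply/negP => zK; apply: nz; exists z => //;
      exact: (@bowen_center _ _ T n z _ (addr_gt0 r0 r0))
    | move=> a b; rewrite !inE => /orP[/eqP->|aK] /orP[/eqP->|bK];
      [ by rewrite eqxx
      | move=> _ Hb; apply: nz; exists b => //; exact: (@bowen_sym _ _ T)
      | move=> _ Hb; apply: nz; exists a => //
      | exact: sK ] ] | ]).
- by have := bnd _ sK'; rewrite /= ltnNge -(addn0 (size K)) hd.
- apply: (IH (z :: K)) => //; first by move=> a; rewrite inE => /orP[/eqP->|/AK].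
  by rewrite /= -addn1 -addnA add1n.
Qed.
End Sep.
Section PartA.
Context {R : realType} {X : metricType R}.
Variables (T : X -> X) (phi : nat -> X -> R) (Z : set X).

Lemma W_le_M s N eps : (W_N T phi Z s N eps <= M_N T phi Z s N eps)%E.
Proof.
apply: le_ereal_inf => v [I [x [n [[HN Hc] ->]]]].
exists I, x, n, (fun _ => 1); split.
- split; first by move=> i Ii; split; [exact: HN | exact: ltr01].
  move=> z Zz; have [i Ii Bi] := Hc z Zz.
  apply: esum_ge; exists [set i]; first by split; [exact: finite_set1 | move=> j ->].
  by rewrite fsbig_set1 indicE mem_set// mul1r.
- by apply: eq_esum => i _; rewrite mul1r.
Qed.
End PartA.
Section Helpers.
Context {R : realType}.

Lemma esum_subset (I : choiceType) (S1 S2 : set I) (a : I -> \bar R) :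
  S1 `<=` S2 -> (\esum_(i in S1) a i <= \esum_(i in S2) a i)%E.
Proof.
move=> S12; apply: ge_ereal_sup => _ [F [finF FS] <-]; apply: ereal_sup_ubound.
by exists F => //; split => //; exact: subset_trans FS S12.
Qed.

Lemma esum_scale_lb (I : choiceType) (S : set I) (c : I -> R) (t u : R) :
  0 <= u -> (t%:E < \esum_(i in S) (c i)%:E)%E ->
  ((t * u)%:E <= \esum_(i in S) (c i * u)%:E)%E.
Proof.
move=> u0 /ereal_sup_gt [_ [F [finF FS] <-] tlt].
apply: esum_ge; exists F; first by split.
rewrite fsumEFin //; rewrite fsumEFin // in tlt.
by rewrite lee_fin -mulr_fsuml ler_wpM2r // ltW.
Qed.

Lemma geo_partial (q : R) N k : 0 <= q < 1 ->
  \sum_(0 <= i < k | (N <= i)%N) q ^+ i <= (q ^+ N - q ^+ (maxn N k)) / (1 - q).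
Proof.
move=> /andP[q0 q1]; have q1' : 1 - q != 0 by rewrite subr_eq0 eq_sym lt_eqF.
elim: k => [|k IH]; first by rewrite big_geq // maxn0 subrr mul0r.
rewrite big_mkcond big_nat_recr //= -big_mkcond /=.
case: (leqP N k) => Nk.
- have -> : maxn N k.+1 = k.+1 by apply/maxn_idPr/leqW.
  have e : maxn N k = k by apply/maxn_idPr.
  rewrite e in IH.
  have -> : (q ^+ N - q ^+ k.+1) / (1 - q) = (q ^+ N - q ^+ k) / (1 - q) + q ^+ k.
    by rewrite exprS; field.
  by rewrite lerD2r.
- have e1 : maxn N k.+1 = N by apply/maxn_idPl.
  have e2 : maxn N k = N by apply/maxn_idPl/ltnW.
  by rewrite e1 addr0; rewrite e2 in IH.
Qed.

Lemma geo_esum (q : R) N : 0 <= q < 1 ->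
  (\esum_(i in [set i | (N <= i)%N]) (q ^+ i)%:E <= (q ^+ N / (1 - q))%:E)%E.
Proof.
move=> hq; have /andP[q0 q1] := hq.
rewrite -(@nneseries_esum _ _ (fun i => (N <= i)%N)); last first.
  by move=> n _; rewrite lee_fin exprn_ge0.
apply: lime_le.
  by apply: is_cvg_nneseries_cond => n _ _; rewrite lee_fin exprn_ge0.
apply: nearW => k; rewrite sumEFin lee_fin (le_trans (geo_partial q N k hq)) //.
rewrite ler_wpM2r //; first by rewrite invr_ge0 subr_ge0 ltW.
by rewrite gerBl exprn_ge0.
Qed.
End Helpers.
Section PartB.
Context {R : realType} {X : metricType R}.
Variables (T : X -> X) (phi : nat -> X -> R) (Z : set X).
Hypotheses (cpt : compact [set: X]) (contT : continuous T).
Variables (theta eps s : R) (N : nat) (I : set nat) (x : nat -> X) (n : nat -> nat)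
  (c : nat -> R) (x0 : X).
Hypotheses (theta0 : 0 < theta) (eps0 : 0 < eps).
Hypothesis (fam : is_wfamily T Z N eps I x n c).
Hypothesis (Hrad : forall m, (N <= m)%N ->
  expR (- (m%:R * eps)) + expR (- (m%:R * eps)) <= expR (- (m%:R * (eps / 2)))).
Hypothesis (Hgeo : expR (- theta) ^+ N / (1 - expR (- theta)) < 1).

Let Im m := I `&` [set i | n i = m].
Let r m : R := expR (- (m%:R * eps)).
Let g z i : \bar R := (c i * \1_(nball T (n i) (x i) eps) z)%:E.
Let w i : \bar R := ((c i * expR (- ((n i)%:R * s)))%:E
                      * expeR (sup_ball T phi (n i) (x i) eps))%E.
Let A m := [set z | Z z /\ ((expR (- (m%:R * theta)))%:E < \esum_(i in Im m) g z i)%E].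

Let c_pos i : I i -> 0 < c i. Proof. by move=> /(fam.1 i) []. Qed.

Let w_ge0 i : I i -> (0 <= w i)%E.
Proof.
move=> Ii; rewrite /w mule_ge0 // ?expeR_ge0 // lee_fin mulr_ge0 // ?expR_ge0 //.
exact/ltW/c_pos.
Qed.

Let Im_triv : trivIset setT Im.
Proof. by move=> i j _ _ [k [[_ <-] [_ <-]]]. Qed.

Lemma level_exists z : Z z -> exists2 m, (N <= m)%N & A m z.
Proof.
move=> Zz; apply: contrapT => H.
have H' : forall m, [set m | (N <= m)%N] m ->
    (\esum_(i in Im m) g z i <= (expR (- (m%:R * theta)))%:E)%E.
  move=> m Nm; rewrite leNgt; apply/negP => lt; apply: H; exists m => //.
have := fam.2 z Zz.
have IE : I = \bigcup_(m in [set m | (N <= m)%N]) Im m.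
  apply/seteqP; split => [i Ii|i [m _ [Ii _]]] //.
  by exists (n i); [exact: (fam.1 i Ii).1 | split].
have g0 : forall i, (\bigcup_(m in [set m | (N <= m)%N]) Im m) i -> (0 <= g z i)%E.
  by move=> i [m _ [Ii _]]; rewrite /g lee_fin mulr_ge0 //; exact/ltW/c_pos.
rewrite IE (esum_bigcup _ _ (sub_trivIset (subsetT _) Im_triv) g0) => H1.
have H2 := le_trans H1 (le_esum H').
have : (\esum_(i in [set m | (N <= m)%N]) (expR (- (i%:R * theta)))%:E
        <= (expR (- theta) ^+ N / (1 - expR (- theta)))%:E)%E.
  rewrite (eq_esum (b := fun i => (expR (- theta) ^+ i)%:E)).
    apply: geo_esum; rewrite expR_ge0 /= -[X in _ < X]expR0 ltr_expR.
    by rewrite oppr_lt0.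
  by move=> i _; rewrite -expRM_natl mulrN.
move=> /(le_trans H2); rewrite lee_fin => /(lt_le_trans Hgeo).
by rewrite ltxx.
Qed.

Lemma level_bound m K : sepd T m (r m) K -> (forall a, a \in K -> A m a) ->
  (\esum_(j in [set j | (j < size K)%N])
     (expR (- (m%:R * (s + theta)) + phi m (nth x0 K j)))%:E
   <= \esum_(i in Im m) w i)%E.
Proof.
move=> [uK sK] AK.
pose S j := [set i | (j < size K)%N /\ Im m i /\ nball T m (x i) eps (nth x0 K j)].
have step1 j : [set j | (j < size K)%N] j ->
    ((expR (- (m%:R * (s + theta)) + phi m (nth x0 K j)))%:E
     <= \esum_(i in S j) w i)%E.
  move=> /= jK; set a := nth x0 K j.
  have [_ Aa] : A m a by apply: AK; exact: mem_nth.
  have e1 : \esum_(i in Im m) g a i = \esum_(i in S j) (c i)%:E.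
    have -> : S j = Im m `&` [set i | nball T m (x i) eps a].
      by apply/seteqP; split => [i [_ [? ?]]|i [? ?]] //.
    rewrite [RHS]esum_mkcondr; apply: eq_esum => i [_ /= nim].
    rewrite /g nim indicE; case: (pselect (nball T m (x i) eps a)) => h.
      by rewrite !mem_set //= mulr1.
    by rewrite !memNset //= mulr0.
  rewrite e1 in Aa.
  have -> : - (m%:R * (s + theta)) + phi m a
          = - (m%:R * theta) + (- (m%:R * s) + phi m a) by ring.
  rewrite expRD.
  apply: le_trans (@esum_scale_lb _ _ _ _ _ (expR (- (m%:R * s) + phi m a)) (expR_ge0 _) Aa) _.
  apply: le_esum => i [_ [[Ii /= nim] Bi]].
  rewrite /w nim expRD mulrA EFinM; apply: lee_wpmul2l.
    by rewrite lee_fin mulr_ge0 ?expR_ge0 //; exact/ltW/c_pos.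
  rewrite -[(expR _)%:E]/(expeR (phi m a)%:E) lee_expeR.
  by apply: ereal_sup_ubound; exists a.
have Striv : trivIset setT S.
  move=> j j' _ _ [i [[jK [_ B1]] [jK' [_ B2]]]].
  apply/eqP; rewrite -(nth_uniq x0 jK jK' uK); apply/negP => /negP neq.
  apply: (sK _ _ (mem_nth x0 jK) (mem_nth x0 jK') neq).
  exact: (@bowen_tri _ _ T m _ (x i) _ _ _ (@bowen_sym _ _ T _ _ _ _ B1) B2).
apply: le_trans (le_esum step1) _.
have w0 : forall i, (\bigcup_(j in [set j | (j < size K)%N]) S j) i -> (0 <= w i)%E.
  by move=> i [j _ [_ [[Ii _] _]]]; exact: w_ge0.
rewrite -(esum_bigcup _ _ (sub_trivIset (subsetT _) Striv) w0).
by apply: esum_subset => i [j _ [_ [? _]]].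
Qed.

Lemma partB_main : (Mc_N T phi Z (s + theta) N (eps / 2) <= \esum_(i in I) w i)%E.
Proof.
have hK m : exists K, [/\ sepd T m (r m) K, (forall a, a \in K -> A m a) &
    forall z, A m z -> exists2 a, a \in K & bowen_ball T m a (r m + r m) z].
  have r0 : 0 < r m by exact: expR_gt0.
  have [l Hl] := @bowen_finite_cover _ _ T cpt contT m (r m) r0.
  apply: (@max_sep _ _ T m (r m) (A m) (size l)) => // K sK; exact: sep_size Hl sK.
pose Kf m := projT1 (cid (hK m)).
have KfP m : [/\ sepd T m (r m) (Kf m), (forall a, a \in Kf m -> A m a) &
    forall z, A m z -> exists2 a, a \in Kf m & bowen_ball T m a (r m + r m) z].
  exact: (projT2 (cid (hK m))).
pose S2 := [set p : nat * nat | (N <= p.1)%N /\ (p.2 < size (Kf p.1))%N].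
pose I' := pickle @` S2.
pose x' i := if (unpickle i : option (nat * nat)) is Some p then nth x0 (Kf p.1) p.2 else x0.
pose n' i := if (unpickle i : option (nat * nat)) is Some p then p.1 else N.
have cov : is_cover T Z N (eps / 2) I' x' n'.
  split.
    by move=> _ [p [Np _] <-]; rewrite /n' pickleK.
  move=> z Zz; have [m Nm Amz] := level_exists z Zz.
  have [_ _ Kc] := KfP m; have [a aK Ba] := Kc z Amz.
  exists (pickle (m, index a (Kf m))).
    by exists (m, index a (Kf m)) => //; split => //=; rewrite index_mem.
  rewrite /x' /n' pickleK /= nth_index //.
  exact: (@bowen_mono _ _ T m a _ _ (Hrad m Nm) z Ba).
pose F (p : nat * nat) := (expR (- (p.1%:R * (s + theta)) + phi p.1 (nth x0 (Kf p.1) p.2)))%:E.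
apply: le_trans (ereal_inf_lbound _) _.
  by exists I', x', n'; split; [exact: cov | reflexivity].
rewrite esum_image; last by move=> p q _ _ /(pcan_inj pickleK).
rewrite (eq_esum (b := F)); last by move=> p _; rewrite /x' /n' pickleK.
have E2 : \esum_(p in S2) F p = \esum_(m in [set m | (N <= m)%N])
    \esum_(j in [set j | (j < size (Kf m))%N]) F (m, j).
  rewrite esum_esum; last by move=> *; rewrite lee_fin expR_ge0.
  by apply: eq_esum => -[a b] _.
rewrite E2.
apply: (le_trans (le_esum (b := fun m => \esum_(i in Im m) w i) _)).
  by move=> m _; have [sK AK _] := KfP m; exact: level_bound.
have w0 : forall i, (\bigcup_(m in [set m | (N <= m)%N]) Im m) i -> (0 <= w i)%E.
  by move=> i [m _ [Ii _]]; exact: w_ge0.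
rewrite -(esum_bigcup _ _ (sub_trivIset (subsetT _) Im_triv) w0).
by apply: esum_subset => i [m _ [Ii _]].
Qed.

End PartB.
Section PartBfull.
Context {R : realType} {X : metricType R}.
Variables (T : X -> X) (phi : nat -> X -> R) (Z : set X).
Hypotheses (cpt : compact [set: X]) (contT : continuous T).

Lemma radius_ev (eps : R) : 0 < eps -> \forall m \near \oo,
  expR (- (m%:R * eps)) + expR (- (m%:R * eps)) <= expR (- (m%:R * (eps / 2))).
Proof.
move=> e0; apply: filterS (nbhs_infty_ger (2 / eps)) => m hm.
have h2 : 2 <= expR (m%:R * (eps / 2)).
  apply: le_trans (expR_ge1Dx _); rewrite -lerBlDl.
  have -> : (2 : R) - 1 = 1 by lra.
  by rewrite mulrA ler_pdivlMr // mul1r -ler_pdivrMr.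
have -> : expR (- (m%:R * (eps / 2))) = expR (- (m%:R * eps)) * expR (m%:R * (eps / 2)).
  by rewrite -expRD; congr expR; field.
rewrite -mulr2n -(mulr_natr (expR _) 2); apply: ler_wpM2l => //; exact: expR_ge0.
Qed.

Lemma geo_ev (theta : R) : 0 < theta -> \forall N \near \oo,
  expR (- theta) ^+ N / (1 - expR (- theta)) < 1.
Proof.
move=> t0; set q := expR (- theta).
have q1 : q < 1 by rewrite /q -[X in _ < X]expR0 ltr_expR oppr_lt0.
have q0 : 0 <= q by exact: expR_ge0.
have hq : `|q| < 1 by rewrite ger0_norm.
have q1' : 0 < 1 - q by rewrite subr_gt0.
apply: filterS (cvgr0_norm_lt (geometric 1 q) (cvg_geometric 1 hq) _ q1') => N /=.
rewrite mul1r ger0_norm ?exprn_ge0 // => hN.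
by rewrite ltr_pdivrMr ?subr_gt0 // mul1r.
Qed.

Lemma partB_full (z0 : X) theta eps : 0 < theta -> 0 < eps ->
  exists N0 : nat, forall (N : nat) (s : R), (N0 <= N)%N ->
    (Mc_N T phi Z (s + theta) N (eps / 2) <= W_N T phi Z s N eps)%E.
Proof.
move=> t0 e0.
have [N0 _ HN0] := filterI (radius_ev eps e0) (geo_ev theta t0).
exists N0 => N s N0N; apply/ereal_infP => v [I [x [n [c [fam ->]]]]].
apply: (@partB_main _ _ T phi Z cpt contT theta eps s N I x n c z0) => //.
- by move=> m Nm; exact: (HN0 m (leq_trans N0N Nm)).1.
- exact: (HN0 N N0N).2.
Qed.
End PartBfull.
Section PartC1.
Context {R : realType}.

Lemma limn_nondec (u : nat -> \bar R) :
  {homo u : a b / (a <= b)%N >-> (a <= b)%E} -> limn u = ereal_sup (range u).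
Proof. by move=> h; apply: (cvg_lim (@ereal_hausdorff R)); exact: ereal_nondecreasing_cvgn. Qed.

Lemma LimLe (u v : nat -> \bar R) N0 :
  {homo u : a b / (a <= b)%N >-> (a <= b)%E} ->
  {homo v : a b / (a <= b)%N >-> (a <= b)%E} ->
  (forall N, (N0 <= N)%N -> (u N <= v N)%E) -> (limn u <= limn v)%E.
Proof.
move=> hu hv H; rewrite !limn_nondec //; apply: ge_ereal_sup => _ [N _ <-].
apply: le_trans (hu _ _ (leq_maxl N N0)) _.
apply: le_trans (H _ (leq_maxr N N0)) _.
by apply: ereal_sup_ubound; exists (maxn N N0).
Qed.

Lemma limn_ge0 (u : nat -> \bar R) :
  {homo u : a b / (a <= b)%N >-> (a <= b)%E} -> (forall N, (0 <= u N)%E) ->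
  (0 <= limn u)%E.
Proof.
move=> hu u0; rewrite limn_nondec //; apply: le_trans (u0 0%N) _.
by apply: ereal_sup_ubound; exists 0%N.
Qed.

Lemma EpsLe (F G : R -> \bar R) (th : R) :
  (forall s, (0 <= F s)%E) -> (forall s, (F (s + th)%R <= G s)%E) ->
  (ereal_inf [set s%:E | s in [set s | F s = 0%E]] <=
   ereal_inf [set s%:E | s in [set s | G s = 0%E]] + th%:E)%E.
Proof.
move=> F0 FG; rewrite -leeBlDr //; apply/ereal_infP => _ [s Gs <-].
have Fz : F (s + th) = 0%E.
  by apply/eqP; rewrite eq_le F0 andbT -Gs FG.
rewrite leeBlDr //; apply: ereal_inf_lbound; exists (s + th) => //.
Qed.
End PartC1.
Section PartC2.
Context {R : realType} {X : metricType R}.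
Variables (T : X -> X) (phi : nat -> X -> R) (Z : set X).

Definition Mc_s' s eps := limn (fun N => Mc_N T phi Z s N eps).
Definition Mc_eps' eps := ereal_inf [set s%:E | s in [set s | Mc_s' s eps = 0%E]].

Lemma nondec_M s eps :
  {homo (fun N => M_N T phi Z s N eps) : a b / (a <= b)%N >-> (a <= b)%E}.
Proof.
move=> a b ab; apply: le_ereal_inf => _ [I [x [n [[HN Hc] ->]]]].
by exists I, x, n; split => //; split => // i Ii; exact: leq_trans ab (HN i Ii).
Qed.

Lemma nondec_Mc s eps :
  {homo (fun N => Mc_N T phi Z s N eps) : a b / (a <= b)%N >-> (a <= b)%E}.
Proof.
move=> a b ab; apply: le_ereal_inf => _ [I [x [n [[HN Hc] ->]]]].
by exists I, x, n; split => //; split => // i Ii; exact: leq_trans ab (HN i Ii).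
Qed.

Lemma nondec_W s eps :
  {homo (fun N => W_N T phi Z s N eps) : a b / (a <= b)%N >-> (a <= b)%E}.
Proof.
move=> a b ab; apply: le_ereal_inf => _ [I [x [n [c [[HN Hc] ->]]]]].
exists I, x, n, c; split => //; split => // i Ii; have [h1 h2] := HN i Ii.
by split => //; exact: leq_trans ab h1.
Qed.

Lemma M_N_ge0 s N eps : (0 <= M_N T phi Z s N eps)%E.
Proof.
apply/ereal_infP => _ [I [x [n [_ ->]]]]; apply: esum_ge0 => i _.
by apply: mule_ge0; [rewrite lee_fin expR_ge0 | exact: expeR_ge0].
Qed.

Lemma Mc_N_ge0 s N eps : (0 <= Mc_N T phi Z s N eps)%E.
Proof.
by apply/ereal_infP => _ [I [x [n [_ ->]]]]; apply: esum_ge0 => i _; rewrite lee_fin expR_ge0.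
Qed.

Lemma W_N_ge0 s N eps : (0 <= W_N T phi Z s N eps)%E.
Proof.
apply/ereal_infP => _ [I [x [n [c [[HN _] ->]]]]]; apply: esum_ge0 => i Ii.
apply: mule_ge0; last exact: expeR_ge0.
by rewrite lee_fin mulr_ge0 ?expR_ge0 //; exact/ltW/(HN i Ii).2.
Qed.

Lemma Mc_le_M s N eps : (Mc_N T phi Z s N eps <= M_N T phi Z s N eps)%E.
Proof.
apply/ereal_infP => _ [I [x [n [cov ->]]]].
apply: le_trans (ereal_inf_lbound _) _.
  by exists I, x, n; split; [exact: cov | reflexivity].
apply: le_esum => i _; rewrite expRD EFinM; apply: lee_wpmul2l.
  by rewrite lee_fin expR_ge0.
rewrite -[(expR (phi _ _))%:E]/(expeR (phi _ _)%:E) lee_expeR.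
apply: ereal_sup_ubound; exists (x i) => //.
exact: (@bowen_center _ _ T _ _ _ (expR_gt0 _)).
Qed.

Lemma Mc_mono_eps s N e e' : e <= e' ->
  (Mc_N T phi Z s N e <= Mc_N T phi Z s N e')%E.
Proof.
move=> ee; apply: le_ereal_inf => _ [I [x [n [[HN Hc] ->]]]].
exists I, x, n; split => //; split => // z Zz; have [i Ii B] := Hc z Zz.
exists i => //; apply: (@bowen_mono _ _ T _ _ _ _ _ z B).
by rewrite ler_expR lerN2 ler_wpM2l.
Qed.

Lemma Mcs_ge0 s e : (0 <= Mc_s' s e)%E.
Proof. by apply: limn_ge0; [exact: nondec_Mc | move=> N; exact: Mc_N_ge0]. Qed.

Lemma Mceps_mono e e' : e <= e' -> (Mc_eps' e <= Mc_eps' e')%E.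
Proof.
move=> ee.
have := @EpsLe R (fun s => Mc_s' s e) (fun s => Mc_s' s e') 0 (fun s => Mcs_ge0 s e).
rewrite adde0; apply => s; rewrite addr0.
apply: (@LimLe _ _ _ 0%N); [exact: nondec_Mc | exact: nondec_Mc |].
by move=> N _; exact: Mc_mono_eps.
Qed.

Lemma M_le_Mc_dist eps th :
  (limn_esup (fun n => (distortion T phi n eps * (n%:R^-1)%:E)%E) < th%:E)%E ->
  exists N1, forall N s, (N1 <= N)%N ->
    (M_N T phi Z (s + th) N eps <= Mc_N T phi Z s N eps)%E.
Proof.
set u := (fun n => _).
rewrite limn_esup_lim (cvg_lim (@ereal_hausdorff R) (@cvg_esups_inf _ u)) => H.
have [_ [N1 _ <-] lt] := ereal_inf_lt H.
exists N1.+1 => N s N1N; apply/ereal_infP => _ [I [x [n [cov ->]]]].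
apply: le_trans (ereal_inf_lbound _) _.
  by exists I, x, n; split; [exact: cov | reflexivity].
apply: le_esum => i Ii; have Ni := cov.1 i Ii; set m := n i.
have m0 : (0 < m%:R :> R) by rewrite ltr0n (leq_trans _ Ni) // (leq_trans _ N1N).
have key : (sup_ball T phi m (x i) eps <= (phi m (x i) + m%:R * th)%:E)%E.
  apply: ge_ereal_sup => _ [y By <-]; rewrite lee_fin.
  have h1 : ((`|phi m (x i) - phi m y|)%:E <= distortion T phi m eps)%E.
    by apply: ereal_sup_ubound; exists (x i), y.
  have h2 : (u m <= esups u N1)%E.
    by apply: ereal_sup_ubound; exists m => //=; exact: leq_trans (ltnW N1N) Ni.
  have h3 : ((`|phi m (x i) - phi m y| / m%:R)%:E < th%:E)%E.
    apply: le_lt_trans lt; apply: le_trans h2; rewrite /u EFinM.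
    by apply: lee_wpmul2r => //; rewrite lee_fin invr_ge0 ltW.
  rewrite lte_fin ltr_pdivrMr // in h3.
  have h4 := ler_norm (phi m y - phi m (x i)); rewrite distrC in h3.
  rewrite (mulrC m%:R); lra.
apply: le_trans (lee_wpmul2l _ (_ : expeR _ <= expeR _)%E) _.
- by rewrite lee_fin expR_ge0.
- by rewrite lee_expeR; exact: key.
rewrite /= -EFinM -expRD lee_fin ler_expR.
have -> : - (m%:R * (s + th)) + (phi m (x i) + m%:R * th) = - (m%:R * s) + phi m (x i)
  by ring.
by [].
Qed.
End PartC2.
Section PartC3.
Context {R : realType} {X : metricType R}.
Variables (T : X -> X) (phi : nat -> X -> R) (Z : set X).
Hypotheses (cpt : compact [set: X]) (contT : continuous T)
  (temp : tempered_distortion T phi).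
Variable z0 : X.

Let f := Mc_eps' T phi Z.
Let dl eps := limn_esup (fun n => (distortion T phi n eps * (n%:R^-1)%:E)%E).
Let L := ereal_inf [set f x | x in [set` Interval (BRight (0:R)) (BInfty R false)]].

Let f_cvg : f e @[e --> 0^'+] --> L.
Proof.
apply: (@nondecreasing_at_right_cvge R f 0 (BInfty R false)); first by [].
by move=> a b _ _ ab; exact: Mceps_mono.
Qed.

Let L_le e : 0 < e -> (L <= f e)%E.
Proof. by move=> e0; apply: ereal_inf_lbound; exists e => //=; rewrite in_itv /= e0. Qed.

Let Ms_ge0 s e : (0 <= M_s T phi Z s e)%E.
Proof. by apply: limn_ge0; [exact: nondec_M | move=> N; exact: M_N_ge0]. Qed.
Let Ws_ge0 s e : (0 <= W_s T phi Z s e)%E.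
Proof. by apply: limn_ge0; [exact: nondec_W | move=> N; exact: W_N_ge0]. Qed.

Let W_lower e : 0 < e -> (f (e / 2) <= W_eps T phi Z e)%E.
Proof.
move=> e0; apply/lee_addgt0Pr => th th0.
have [N0 HN0] := @partB_full _ _ T phi Z cpt contT z0 th e th0 e0.
apply: (@EpsLe R (fun s => Mc_s' T phi Z s (e / 2)) (fun s => W_s T phi Z s e) th).
  by move=> s; exact: Mcs_ge0.
move=> s; apply: (@LimLe _ _ _ N0); [exact: nondec_Mc | exact: nondec_W |].
by move=> N hN; exact: HN0.
Qed.

Let W_le_Meps e : (W_eps T phi Z e <= M_eps T phi Z e)%E.
Proof.
have := @EpsLe R (fun s => W_s T phi Z s e) (fun s => M_s T phi Z s e) 0 (fun s => Ws_ge0 s e).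
rewrite adde0; apply => s; rewrite addr0.
apply: (@LimLe _ _ _ 0%N); [exact: nondec_W | exact: nondec_M |].
by move=> N _; exact: W_le_M.
Qed.

Let Mc_le_Meps e : (f e <= M_eps T phi Z e)%E.
Proof.
have := @EpsLe R (fun s => Mc_s' T phi Z s e) (fun s => M_s T phi Z s e) 0 (fun s => Mcs_ge0 T phi Z s e).
rewrite adde0; apply => s; rewrite addr0.
apply: (@LimLe _ _ _ 0%N); [exact: nondec_Mc | exact: nondec_M |].
by move=> N _; exact: Mc_le_M.
Qed.

Let M_upper : \forall e \near 0^'+, (M_eps T phi Z e <= f e + dl e)%E.
Proof.
have [fin _] := (fine_cvgP dl 0).1 temp.
apply: filterS fin => e /fineK de.
apply/lee_addgt0Pr => k k0; rewrite -de -addeA -EFinD.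
apply: (@EpsLe R (fun s => M_s T phi Z s e) (fun s => Mc_s' T phi Z s e)).
  by move=> s; exact: Ms_ge0.
have [N1 HN1] : exists N1, forall N s, (N1 <= N)%N ->
    (M_N T phi Z (s + (fine (dl e) + k)) N e <= Mc_N T phi Z s N e)%E.
  apply: M_le_Mc_dist; rewrite -/(dl e) -de lte_fin ltrDl //.
move=> s; apply: (@LimLe _ _ _ N1); [exact: nondec_M | exact: nondec_Mc |].
by move=> N hN; exact: HN1.
Qed.

Let upper_cvg : (f e + dl e)%E @[e --> 0^'+] --> L.
Proof.
rewrite -[L]adde0; apply: cvgeD.
- exact: fin_num_adde_defl.
- exact: f_cvg.
- exact: temp.
Qed.

Lemma M_cvg : M_eps T phi Z e @[e --> 0^'+] --> L.
Proof.
apply: (@squeeze_cvge _ _ _ _ (fun=> L) _ (fun e => f e + dl e)%E); last 2 first.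
- exact: cvg_cst.
- exact: upper_cvg.
apply: filterS (filterI M_upper (nbhs_right_gt 0)) => e [H e0].
by rewrite H andbT (le_trans (L_le e e0) (Mc_le_Meps e)).
Qed.

Lemma W_cvg : W_eps T phi Z e @[e --> 0^'+] --> L.
Proof.
apply: (@squeeze_cvge _ _ _ _ (fun=> L) _ (fun e => f e + dl e)%E); last 2 first.
- exact: cvg_cst.
- exact: upper_cvg.
apply: filterS (filterI M_upper (nbhs_right_gt 0)) => e [H e0].
rewrite (le_trans (W_le_Meps e) H) andbT.
apply: le_trans (W_lower e e0); apply: L_le; exact: divr_gt0.
Qed.

Lemma PB_eq : P_B T phi Z = P_WB T phi Z.
Proof.
rewrite /P_B /P_WB (cvg_lim (@ereal_hausdorff R) M_cvg).
by rewrite (cvg_lim (@ereal_hausdorff R) W_cvg).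
Qed.
End PartC3.

Theorem mainTheorem3 (R : realType) (X : metricType R) (T : X -> X)
    (phi : nat -> X -> R) (Z : set X) :
  compact [set: X] ->
  continuous T ->
  (forall n, continuous (phi n)) ->
  tempered_distortion T phi ->
  Z !=set0 ->
  (forall theta : R, 0 < theta ->
     exists2 eps0 : R, 0 < eps0 &
       forall eps : R, 0 < eps -> eps < eps0 ->
         exists N0 : nat, forall (N : nat) (s : R), (N0 <= N)%N ->
           (Mc_N T phi Z (s + theta) N (eps / 2) <= W_N T phi Z s N eps)%E /\
           (W_N T phi Z s N eps <= M_N T phi Z s N eps)%E)
  /\ P_B T phi Z = P_WB T phi Z.
Proof.
move=> cpt contT cphi temp [z0 _].
split; last exact: (@PB_eq _ _ T phi Z cpt contT temp z0).
move=> th th0; exists 1 => // eps e0 _.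
have [N0 H] := @partB_full _ _ T phi Z cpt contT z0 th eps th0 e0.
by exists N0 => N s hN; split; [exact: H | exact: W_le_M].
Qed.
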